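(* Let $0<r<1$ and $c>0$. For every extremally disconnected set $S$, the set $C(S,\mathbb{Z}((T))_{r,\le c})$ of continuous maps from $S$ to the topological space $\mathbb{Z}((T))_{r,\le c}$ is identified (via $F\mapsto$ its coefficient functions) with the set of formal sums $\sum_{n\ge k}a_nT^n$, for some $k\in\mathbb{Z}$, with $a_n\in C(S,\mathbb{Z})$ and $\sum_n|a_n(s)|r^n\le c$ for all $s\in S$. In other words, the condensed set defined by the latter sets is the condensation of the topological space $\mathbb{Z}((T))_{r,\le c}$.
   Context: $\mathbb{Z}((T))_{r,\le c}$ is the set of integer Laurent series $\sum_{n\gg-\infty}a_nT^n$ ($a_n\in\mathbb{Z}$, $a_n=0$ for $n$ sufficiently negative) with $\sum|a_n|r^n\le c$, topologized by the $T$-adic norm $\|f\|=\delta^{v_T(f)}$ for a fixed $\delta\in(0,1)$, where $v_T(f)$ is the smallest $n$ with $a_n\ne 0$ (so two series are close iff their coefficients agree up to a large index). An extremally disconnected set is a projective object in compact Hausdorff spaces; the condensation of a T1 space $X$ is $S\mapsto C(S,X)$. $\mathbb{Z}$ carries the discrete topology. *)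

(* Defs.v *)
From HB Require Import structures.
From mathcomp Require Import all_boot all_order all_algebra.
From mathcomp Require Import all_classical all_reals all_analysis.
Set Implicit Arguments. Unset Strict Implicit. Unset Printing Implicit Defensive.
Import Order.TTheory GRing.Theory Num.Theory.
Local Open Scope classical_set_scope.
Local Open Scope ring_scope.

(* An integer Laurent series sum_n a_n T^n is represented by its coefficient
   function a : int -> int; it must vanish for n sufficiently negative. *)
Definition laurent (a : int -> int) : Prop :=
  exists k : int, forall n : int, n < k -> a n = 0.

Definition rnorm_sum (R : realType) (r : R) (a : int -> int) : \bar R :=
  (\esum_(n in [set: int]) ((`|a n|%:~R * r ^ n)%:E))%E.

Definition in_Zrc (R : realType) (r c : R) (a : int -> int) : Prop :=
  laurent a /\ (rnorm_sum r a <= c%:E)%E.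

Definition vT (a : int -> int) : int :=
  xget 0 [set n | a n != 0 /\ forall m : int, m < n -> a m = 0].

Definition tnorm (R : realType) (delta : R) (a : int -> int) : R :=
  if `[< exists n, a n != 0 >] then delta ^ (vT a) else 0.

(* continuity of F : S -> Z((T))_{r,<=c} for the metric d(f,g) = ||f - g|| *)
Definition tcontinuous (R : realType) (delta : R) (S : topologicalType)
  (F : S -> int -> int) : Prop :=
  forall s : S, forall e : R, 0 < e ->
    \forall t \near s, tnorm delta (fun n => F t n - F s n) < e.

Definition compact_hausdorff (X : topologicalType) : Prop :=
  compact [set: X] /\ hausdorff_space X.

(* extremally disconnected set = projective object of CHaus *)
Definition extremally_disconnected_set (S : topologicalType) : Prop :=
  compact_hausdorff S /\
  forall (X Y : topologicalType) (p : X -> Y) (f : S -> Y),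
    compact_hausdorff X -> compact_hausdorff Y ->
    continuous p -> (forall y, exists x, p x = y) -> continuous f ->
    exists g : S -> X, continuous g /\ (forall s, p (g s) = f s).

Definition coeff_family (R : realType) (r c : R) (S : topologicalType)
  (a : int -> S -> int) : Prop :=
  (forall n : int, continuous (a n : S -> discrete_topology int)) /\
  (exists k : int, forall n : int, n < k -> forall s : S, a n s = 0) /\
  (forall s : S, (rnorm_sum r (fun n => a n s) <= c%:E)%E).

(* Main.v *)
Require Import Defs.
From HB Require Import structures.
From mathcomp Require Import all_boot all_order all_algebra.
From mathcomp Require Import all_classical all_reals all_analysis.
From mathcomp Require Import zify.
Import Order.TTheory GRing.Theory Num.Theory.
Local Open Scope ring_scope.
Set Implicit Arguments. Unset Strict Implicit.

Lemma exprz_anti (R : realType) (x : R) (m n : int) :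
  0 < x -> x <= 1 -> m <= n -> x ^ n <= x ^ m.
Proof.
move=> x0 x1 mn.
have -> : n = m + (n - m) by rewrite addrC subrK.
rewrite expfzDr ?gt_eqF//.
have : 0 <= n - m by rewrite subr_ge0.
case: (n - m) => // k _.
rewrite ler_piMr ?exprz_ge0 //. all: try exact: ltW.
exact: (exprn_ile1 k (ltW x0) x1).
Qed.

Lemma vT_spec (a : int -> int) : laurent a -> (exists n, a n != 0) ->
  a (vT a) != 0 /\ forall m, m < vT a -> a m = 0.
Proof.
move=> [k hk] [n0 hn0]; apply: (@xgetPex _ 0 [set n | a n != 0 /\ forall m : int, m < n -> a m = 0]).
have kn0 : k <= n0 by rewrite leNgt; apply/negP => /hk; apply/eqP.
have ex : exists j : nat, a (k + j%:Z) != 0.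
  by exists `|n0 - k|%N; have -> : k + `|n0 - k|%N = n0 by lia.
case: (ex_minnP ex) => j0 Pj0 jmin.
exists (k + j0%:Z); split => // m mlt.
have [mk|km] := ltP m k; first exact: hk.
apply/eqP; apply/negP => /negP am.
have : (j0 <= `|m - k|)%N by apply: jmin; have -> : k + `|m - k|%N = m by lia.
lia.
Qed.

Lemma tnorm_small (R : realType) (delta : R) (d : int -> int) (n : int) :
  0 < delta < 1 -> laurent d -> tnorm delta d < delta ^ n ->
  forall m, m <= n -> d m = 0.
Proof.
move=> /andP[d0 d1] hl; rewrite /tnorm; case: asboolP => [ex|nex].
  have [nz below] := vT_spec hl ex.
  move=> hlt m mn; have [mv|vm] := ltP m (vT d); first exact: below.
  have : delta ^ n <= delta ^ (vT d).
    by apply: exprz_anti => //; [exact: ltW | exact: le_trans vm mn].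
  by rewrite leNgt hlt.
move=> _ m _; apply/eqP; apply/negP => /negP h; apply: nex; by exists m.
Qed.

Lemma tnorm_le (R : realType) (delta : R) (d : int -> int) (n : int) :
  0 < delta < 1 -> (forall m, m < n -> d m = 0) -> tnorm delta d <= delta ^ n.
Proof.
move=> /andP[d0 d1] hb; rewrite /tnorm; case: asboolP => [ex|nex].
  have [nz below] := vT_spec (ex_intro _ n hb) ex.
  apply: exprz_anti => //; first exact: ltW.
  by rewrite leNgt; apply/negP => /hb; apply/eqP.
by apply: exprz_ge0; exact: ltW.
Qed.

Lemma disc_cont (S : topologicalType) (f : S -> int) :
  (forall s, \forall t \near s, f t = f s) <->
  continuous (f : S -> discrete_topology int).
Proof.
split.
  move=> h s; apply/discrete_cvg; exact: h.
move=> h s; have := h s; move/discrete_cvg; exact.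
Qed.

Lemma term_le_esum (R : realType) (r : R) (a : int -> int) n :
  0 <= r -> ((`|a n|%:~R * r ^ n)%:E <= rnorm_sum r a)%E.
Proof.
move=> r0; apply: esum_ge; exists [set n]%classic.
  by split; [exact: finite_set1 | by []].
by rewrite fsbig_set1.
Qed.

Lemma geo_small (R : realType) (x e : R) : 0 <= x < 1 -> 0 < e ->
  exists N : nat, forall m, (N <= m)%N -> x ^+ m < e.
Proof.
move=> /andP[x0 x1] e0.
have hx : `|x| < 1 by rewrite ger0_norm.
have := cvg_expr hx; move/cvgrPdist_lt => /(_ e e0) [N _ HN].
exists N => m Nm; have := HN m Nm; rewrite /= sub0r normrN ger0_norm //.
exact: exprn_ge0.
Qed.

Lemma lower_bound (R : realType) (r c : R) : 0 < r < 1 -> 0 < c ->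
  exists k : int, forall n, n < k -> c < r ^ n.
Proof.
move=> /andP[r0 r1] c0.
have [N HN] : exists N : nat, forall m, (N <= m)%N -> r ^+ m < c^-1.
  by apply: geo_small; rewrite ?invr_gt0 ?(ltW r0) ?r1.
exists (- N%:Z) => n nlt.
have -> : n = - (`|n|%N)%:Z by lia.
rewrite -exprnN.
have := HN `|n|%N ltac:(lia).
move=> h; rewrite -[c]invrK ltf_pV2 ?posrE ?invr_gt0 ?exprn_gt0 //.
Qed.

Unset Implicit Arguments.
Theorem mainTheorem11 (R : realType) (r c delta : R) :
  0 < r < 1 -> 0 < c -> 0 < delta < 1 ->
  forall S : topologicalType, extremally_disconnected_set S ->
    (forall F : S -> int -> int,
        (forall s, in_Zrc r c (F s)) -> tcontinuous delta F ->
        coeff_family r c (fun n s => F s n))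
    /\
    (forall a : int -> S -> int, coeff_family r c a ->
        exists! F : S -> int -> int,
          (forall s, in_Zrc r c (F s)) /\ tcontinuous delta F /\
          (forall n s, F s n = a n s)).
Proof.
move=> hr hc hd S _.
have /andP[r0 r1] := hr; have /andP[d0 d1] := hd.
split.
- move=> F hF hcont; split; [|split].
  + move=> n; apply/disc_cont => s.
    have := hcont s (delta ^ n) (exprz_gt0 n d0); apply: filterS => t ht.
    have hl : laurent (fun m => F t m - F s m).
      case: (hF t) => [[k1 h1] _]; case: (hF s) => [[k2 h2] _].
      exists (Order.min k1 k2) => m; rewrite lt_min => /andP[m1 m2].
      by rewrite h1 ?h2 ?subrr.
    have := tnorm_small hd hl ht (lexx n).
    by move/eqP; rewrite subr_eq0 => /eqP.
  + have [k hk] := lower_bound hr hc.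
    exists k => n nk s; apply/eqP/negP => /negP nz.
    case: (hF s) => _ hb.
    have := le_trans (term_le_esum (F s) n (ltW r0)) hb.
    rewrite lee_fin; apply/negP; rewrite -ltNge.
    have h1 : 1 <= `|F s n| by rewrite -gtz0_ge1 normr_gt0.
    have h1' : (1 : R) <= `|F s n|%:~R by rewrite ler1z.
    apply: (lt_le_trans (hk n nk)).
    by rewrite ler_peMl // exprz_ge0 // ltW.
  + by move=> s; case: (hF s).
- move=> a [ha [[k hk] hb]].
  exists (fun s n => a n s); split.
    split; [|split] => //.
      move=> s; split; [by exists k => n /hk -> | exact: hb s].
    move=> s e e0.
    have [N hN] : exists N : nat, forall m, (N <= m)%N -> delta ^+ m < e.
      by apply: geo_small => //; rewrite (ltW d0) d1.
    have hnear : forall j : nat, \forall t \near s, forall m, m < k + j%:Z -> a m t = a m s.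
      elim => [|j IH].
        by near=> t; move=> m; rewrite addr0 => mk; rewrite !hk.
      have hc' := (proj2 (disc_cont (a (k + j%:Z)))) (ha (k + j%:Z)) s.
      apply: filterS2 IH hc' => t h1 h2 m mlt.
      have [/h1 //|mge] := ltP m (k + j%:Z).
      have -> : m = k + j%:Z by lia.
      exact: h2.
    have := hnear `|N%:Z - k|%N; apply: filterS => t ht.
    apply: (le_lt_trans (tnorm_le (n := N%:Z) hd _)).
      by move=> m mN; rewrite ht ?subrr //; lia.
    exact: hN N (leqnn N).
  move=> G [_ [_ hG]].
  by apply/funext => s; apply/funext => n; rewrite hG.
Unshelve. all: by end_near.
Qed.
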